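(* Let $\mathbb{R}^n_s$ be $\mathbb{R}^n$ with a non-degenerate symmetric bilinear form of signature $(n-s,s)$, let $G\subset\mathrm{Iso}(\mathbb{R}^n_s)$ be a real Zariski-closed subgroup whose centralizer $L=\mathrm{Z}_{\mathrm{Iso}(\mathbb{R}^n_s)}(G)$ acts transitively on $\mathbb{R}^n$, and let $U$ be the unipotent radical of $L$; assume $U$ acts transitively on $\mathbb{R}^n$. Fix $p\in\mathbb{R}^n$, let $F_p=G.p$, $U_p$ the stabilizer of $p$ in $U$, $U_{F_p}=\{u\in U\mid u.F_p\subseteq F_p\}$ (a subgroup containing $U_p$ as a normal subgroup) and $\tilde U=U_{F_p}/U_p$, acting on $U/U_p$ from the right by $uU_p\cdot \tilde u U_p=u\tilde uU_p$. Let $\Psi:U/U_p\to\mathbb{R}^n$, $uU_p\mapsto u.p$. Then $\Psi$ induces a bijection from the set of orbits of the right action of $\tilde U$ on $U/U_p$ to the set of orbits of $G$ on $\mathbb{R}^n$; more precisely, $\Psi$ maps the orbit $uU_p\cdot\tilde U$ onto the orbit $G.(u.p)$. *)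

(* Defs.v *)
From mathcomp Require Import all_boot all_order all_algebra.
From mathcomp Require Import reals.
From mathcomp Require mpoly.
Set Implicit Arguments. Unset Strict Implicit. Unset Printing Implicit Defensive.
Import Order.TTheory GRing.Theory Num.Theory.
Local Open Scope ring_scope.

Section PseudoEuclidean.
Variables (R : realType) (n s : nat).

(* standard form of signature (n-s, s) on R^n (column vectors):
   B(x,y) = x^T J y with J = diag(1,..,1,-1,..,-1), s entries -1 *)
Definition formJ : 'M[R]_n :=
  \matrix_(i, j) (if i == j then (if (i < n - s)%N then 1 else -1) else 0).

Definition aff := ('M[R]_n * 'cV[R]_n)%type.

Definition act (g : aff) (x : 'cV[R]_n) : 'cV[R]_n := g.1 *m x + g.2.

Definition in_Iso (g : aff) : Prop := g.1^T *m formJ *m g.1 = formJ.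

Definition aff_mul (g h : aff) : aff := (g.1 *m h.1, g.1 *m h.2 + g.2).
Definition aff_one : aff := (1%:M, 0).
Definition aff_inv (g : aff) : aff := (invmx g.1, - (invmx g.1 *m g.2)).

Definition is_subgroup (H : aff -> Prop) : Prop :=
  [/\ H aff_one, (forall g h, H g -> H h -> H (aff_mul g h))
    & (forall g, H g -> H (aff_inv g))].

Definition normal_in (N H : aff -> Prop) : Prop :=
  forall h u, H h -> N u -> N (aff_mul (aff_mul h u) (aff_inv h)).

Definition coords (g : aff) : 'I_(n * n + n) -> R :=
  fun i => match split i with
           | inl j => mxvec g.1 0 j
           | inr j => g.2 j 0
           end.

Definition zariski_closed (H : aff -> Prop) : Prop :=
  exists S : mpoly.mpoly (n * n + n) R -> Prop,
    forall g, H g <-> (in_Iso g /\ forall p, S p -> mpoly.meval (coords g) p = 0).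

(* unipotent affine map (its (n+1)x(n+1) matrix is unipotent iff the linear
   part is) *)
Definition unipotent (g : aff) : Prop := (g.1 - 1%:M) ^+ n = 0.

Definition centralizer (G : aff -> Prop) : aff -> Prop :=
  fun h => in_Iso h /\ forall g, G g -> aff_mul h g = aff_mul g h.

Definition acts_transitively (H : aff -> Prop) : Prop :=
  forall x y : 'cV[R]_n, exists h, H h /\ act h x = y.

(* unipotent radical of the real algebraic group L: the largest normal
   Zariski-closed subgroup of L consisting of unipotent elements
   (in characteristic 0 unipotent algebraic groups are connected) *)
Definition is_unipotent_radical (L U : aff -> Prop) : Prop :=
  [/\ is_subgroup U, (forall u, U u -> L u), normal_in U L, zariski_closed U
    & (forall u, U u -> unipotent u)] /\
  (forall N : aff -> Prop, is_subgroup N -> (forall u, N u -> L u) ->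
        normal_in N L -> zariski_closed N -> (forall u, N u -> unipotent u) ->
        forall u, N u -> U u).

Definition aff_orbit (G : aff -> Prop) (x : 'cV[R]_n) : 'cV[R]_n -> Prop :=
  fun y => exists g, G g /\ y = act g x.

Definition stab (U : aff -> Prop) (p : 'cV[R]_n) : aff -> Prop :=
  fun u => U u /\ act u p = p.

Definition stab_orbit (U G : aff -> Prop) (p : 'cV[R]_n) : aff -> Prop :=
  fun u => U u /\ forall y, aff_orbit G p y -> aff_orbit G p (act u y).

End PseudoEuclidean.

(* Main.v *)
Require Import Defs.
From mathcomp Require Import all_boot all_order all_algebra.
From mathcomp Require Import reals.
Local Open Scope ring_scope.
Import GRing.Theory Num.Theory.

Section Aux.
Variables (R : realType) (n s : nat).

Lemma formJ_sq : formJ R n s *m formJ R n s = 1%:M.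
Proof.
have -> : formJ R n s = diag_mx (\row_j (if (j < n - s)%N then 1 else -1 : R)).
  apply/matrixP=> i j; rewrite !mxE; case: eqP => [->|_]; rewrite ?mulr1n ?mulr0n //.
rewrite mul_diag_mx; apply/matrixP=> i j; rewrite !mxE.
case: eqP => [->|_]; rewrite ?mulr1n ?mulr0n ?mulr0 //.
by case: ifP; rewrite ?mulr1 ?mulrNN ?mulr1.
Qed.

Lemma iso_unit (g : aff R n) : in_Iso s g -> g.1 \in unitmx.
Proof.
rewrite /in_Iso => h.
have : (formJ R n s *m g.1^T *m formJ R n s) *m g.1 = 1%:M.
  by rewrite -!mulmxA (mulmxA g.1^T) h formJ_sq.
by case/mulmx1_unit.
Qed.

Lemma act_mul (g h : aff R n) x : act (aff_mul g h) x = act g (act h x).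
Proof. by rewrite /act /= mulmxDr !mulmxA addrA. Qed.

Lemma act_one x : act (aff_one R n) x = x.
Proof. by rewrite /act /= mul1mx addr0. Qed.

Lemma act_invK (g : aff R n) x : in_Iso s g -> act (aff_inv g) (act g x) = x.
Proof.
move=> /iso_unit u; rewrite /act /= mulmxDr mulmxA mulVmx // mul1mx.
by rewrite -addrA subrr addr0.
Qed.

Lemma act_Kinv (g : aff R n) x : in_Iso s g -> act g (act (aff_inv g) x) = x.
Proof.
move=> /iso_unit u; rewrite /act /= mulmxDr mulmxN !mulmxA mulmxV // !mul1mx.
by rewrite addrNK.
Qed.
End Aux.

Theorem lemma6p7 (R : realType) (n s : nat) (hs : (s <= n)%N)
  (G : aff R n -> Prop)
  (hGIso : forall g, G g -> in_Iso s g)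
  (hGsub : is_subgroup G)
  (hGzar : zariski_closed s G)
  (hLtr : acts_transitively (centralizer s G))
  (U : aff R n -> Prop)
  (hU : is_unipotent_radical s (centralizer s G) U)
  (hUtr : acts_transitively U)
  (p : 'cV[R]_n) :
  let Up := stab U p in
  let UF := stab_orbit U G p in
  (* U_{F_p} is a subgroup containing U_p as a normal subgroup *)
  [/\ is_subgroup UF, (forall u, Up u -> UF u) & normal_in Up UF] /\
  [/\
  (* Psi maps the orbit uU_p . U~ onto G.(u.p) *)
      (forall u, U u -> forall x,
         (exists ut, UF ut /\ x = act (aff_mul u ut) p) <-> aff_orbit G (act u p) x),
  (* the induced map on orbit sets is well defined and injective:
     uU_p and vU_p lie in the same U~-orbit iff G.(u.p) = G.(v.p) *)
      (forall u v, U u -> U v ->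
         ((exists ut, UF ut /\ Up (aff_mul (aff_inv (aff_mul u ut)) v))
          <-> (forall x, aff_orbit G (act u p) x <-> aff_orbit G (act v p) x)))
  (* and surjective: every G-orbit is G.(u.p) for some u in U *)
    & (forall x, exists u, U u /\
         (forall y, aff_orbit G x y <-> aff_orbit G (act u p) y))].
Proof.
move=> Up UF.
case: hU => [[[U1 UM UV] UL _ _ _] _].
case: hGsub => [G1 GM GV].
have UIso u : U u -> in_Iso s u by move=> /UL [].
have comm u g x : U u -> G g -> act u (act g x) = act g (act u x).
  by move=> /UL [_ c] Gg; rewrite -!act_mul c.
have orbit_g g x y : G g -> (aff_orbit G (act g x) y <-> aff_orbit G x y).
  move=> Gg; split.
    by case=> h [Gh ->]; exists (aff_mul h g); split; [apply: GM | rewrite act_mul].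
  case=> h [Gh ->]; exists (aff_mul h (aff_inv g)); split; first by apply: GM => //; apply: GV.
  by rewrite act_mul (act_invK _ _ _ _ _ (hGIso _ Gg)).
have UFchar u : UF u <-> U u /\ aff_orbit G p (act u p).
  split.
    by case=> Uu h; split => //; apply: h; exists (aff_one R n); rewrite act_one.
  case=> Uu [g0 [Gg0 e]]; split => // y [g [Gg ->]].
  rewrite comm // e -act_mul; exists (aff_mul g g0); split => //; exact: GM.
have inv_p h g0 : U h -> G g0 -> act h p = act g0 p ->
    act (aff_inv h) p = act (aff_inv g0) p.
  move=> Uh Gg0 e.
  rewrite -{1}(act_invK _ _ _ _ p (hGIso _ Gg0)) comm; last by apply: GV.
    by rewrite -e (act_invK _ _ s) //; exact: UIso.
  by apply: UV.
have partA : forall u, U u -> forall x,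
    (exists ut, UF ut /\ x = act (aff_mul u ut) p) <-> aff_orbit G (act u p) x.
  move=> u Uu x; split.
    case=> ut [/UFchar [Uut [g [Gg e]]] ->].
    by exists g; split => //; rewrite act_mul e comm.
  case=> g [Gg ->]; have [ut [Uut e]] := hUtr p (act g p).
  exists ut; split; first by apply/UFchar; split => //; exists g.
  by rewrite act_mul e (comm u g).
split; [split|split].
- split.
  + by apply/UFchar; split => //; exists (aff_one R n); rewrite !act_one.
  + move=> g h /UFchar [Ug [g1 [Gg1 e1]]] /UFchar [Uh [h1 [Gh1 e1']]].
    apply/UFchar; split; first exact: UM.
    rewrite act_mul e1' comm // e1 -act_mul; exists (aff_mul h1 g1); split => //.
    exact: GM.
  + move=> g /UFchar [Ug [g0 [Gg0 e]]]; apply/UFchar; split; first exact: UV.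
    by rewrite (inv_p g g0) //; exists (aff_inv g0); split => //; exact: GV.
- by move=> u [Uu e]; apply/UFchar; split => //; exists (aff_one R n); rewrite e act_one.
- move=> h u /UFchar [Uh [g0 [Gg0 e]]] [Uu eu]; split.
    exact: (UM _ _ (UM _ _ Uh Uu) (UV _ Uh)).
  have Gi : G (aff_inv g0) by exact: GV.
  rewrite !act_mul (inv_p h g0) // (comm u) // eu (comm h) // e.
  by rewrite (act_invK _ _ s) //; exact: hGIso.
- exact: partA.
- move=> u v Uu Uv; split.
    case=> ut [UFut [_ e]].
    have Uut : U ut by case/UFchar: UFut.
    have Uuut : U (aff_mul u ut) by exact: UM.
    have ev : act v p = act (aff_mul u ut) p.
      move: e; rewrite act_mul => /(f_equal (act (aff_mul u ut))).
      by rewrite (act_Kinv _ _ s) //; exact: UIso.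
    have : aff_orbit G (act u p) (act v p) by apply/partA => //; exists ut.
    case=> g [Gg ->] x; split => [h|]; last by move/orbit_g; apply.
    by apply/orbit_g.
  move=> h; have : aff_orbit G (act u p) (act v p).
    by apply/h; exists (aff_one R n); rewrite act_one.
  case/partA => // ut [UFut e]; exists ut; split => //.
  have Uut : U ut by case/UFchar: UFut.
  split; first exact: (UM _ _ (UV _ (UM _ _ Uu Uut)) Uv).
  by rewrite act_mul e (act_invK _ _ s) //; exact: (UIso _ (UM _ _ Uu Uut)).
- move=> x; have [u [Uu e]] := hUtr p x.
  by exists u; split => // y; rewrite e.
Qed.
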